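(* Let $d\ge 1$ and $s\ge 2$ be integers. If $s\equiv 1\pmod{d+2}$, then there are exactly two $(s,s+1)$-core partitions with $d$-distinct parts of largest size; otherwise there is exactly one such partition of largest size.
   Context: A partition $\lambda=(\lambda_1,\ldots,\lambda_l)$ is a finite nonincreasing sequence of positive integers (the empty partition is allowed); its size is $|\lambda|=\lambda_1+\cdots+\lambda_l$. $\lambda$ is a partition with $d$-distinct parts if $\lambda_i-\lambda_{i+1}\ge d$ for all $1\le i\le l-1$. In the Young diagram of $\lambda$, the hook length of box $(i,j)$ is the number of boxes directly to its right, plus the number directly below it, plus one. $\lambda$ is an $(s,s+1)$-core partition if no box has hook length $s$ or $s+1$. ''Of largest size'' means of maximum size among all $(s,s+1)$-core partitions with $d$-distinct parts. *)

(* Defs.v *)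
(* Partitions are represented as seq nat (parts listed
   in nonincreasing order, all positive). Boxes are 0-indexed (i, j)
   with i < size lam and j < lam_i. *)
From mathcomp Require Import all_boot.
Set Implicit Arguments. Unset Strict Implicit. Unset Printing Implicit Defensive.

Definition is_partition (lam : seq nat) : bool :=
  sorted geq lam && all (fun x => 0 < x) lam.

Definition d_distinct (d : nat) (lam : seq nat) : bool :=
  sorted (fun a b => b + d <= a) lam.

Definition psize (lam : seq nat) : nat := sumn lam.

Definition conj_part (lam : seq nat) (j : nat) : nat := count (fun x => j < x) lam.

Definition hook (lam : seq nat) (i j : nat) : nat :=
  (nth 0 lam i - j - 1) + (conj_part lam j - i - 1) + 1.

Definition has_hook (lam : seq nat) (h : nat) : bool :=
  has (fun i => has (fun j => hook lam i j == h) (iota 0 (nth 0 lam i)))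
      (iota 0 (size lam)).

Definition is_core2 (s t : nat) (lam : seq nat) : bool :=
  ~~ has_hook lam s && ~~ has_hook lam t.

Definition core_ddist (s d : nat) (lam : seq nat) : bool :=
  [&& is_partition lam, d_distinct d lam & is_core2 s s.+1 lam].

(* Main.v *)
Require Import Defs.
From mathcomp Require Import all_boot zify.
Set Implicit Arguments. Unset Strict Implicit. Unset Printing Implicit Defensive.

Fixpoint aux (d c n : nat) : seq nat :=
  if n is n'.+1 then c :: aux d (c - d) n' else [::].

Lemma size_aux d c n : size (aux d c n) = n.
Proof. by elim: n c => //= n IH c; rewrite IH. Qed.

Lemma nth_aux d c n i : i < n -> nth 0 (aux d c n) i = c - i * d.
Proof.
elim: n c i => // n IH c [|i] /=; first by rewrite subn0.
rewrite ltnS => hi; rewrite IH //; lia.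
Qed.

Lemma sum_aux d c n : n * d <= c + d ->
  2 * sumn (aux d c n) + d * n * n = 2 * n * c + d * n.
Proof.
elim: n c => [|n IH] c h /=; first by rewrite !muln0.
case: n IH h => [|n] IH h; first by rewrite /=; lia.
have hc : d <= c by nia.
have := IH (c - d) ltac:(lia).
have E : c = (c - d) + d by lia.
move: (c - d) E => c' ->.
nia.
Qed.

Lemma aux_ok d c n : n * d < c + d ->
  sorted (fun a b => b + d <= a) (aux d c n) && all (fun x => 0 < x) (aux d c n).
Proof.
elim: n c => [|n IH] c h //=.
have := IH (c - d) ltac:(lia).
case: n IH h => [|n] IH h /=; first by lia.
move=> /andP[-> ->]; rewrite !andbT; apply/andP; split; lia.
Qed.
Lemma conj_split j lam :
  conj_part lam j = conj_part lam j.+1 + count (pred1 j.+1) lam.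
Proof.
rewrite /conj_part; elim: lam => //= x t ->.
case: (ltngtP x j.+1) => h /=; try lia.

Qed.

Definition R d := fun a b : nat => b + d <= a.

Lemma R_trans d : transitive (R d).
Proof. rewrite /R => x y z; lia. Qed.

Lemma dd_nth d a t i : sorted (R d) (a :: t) -> i < size (a :: t) ->
  nth 0 (a :: t) i + i * d <= a.
Proof.
elim: t a i => [|b t IH] a [|i] /=; try by rewrite ?addn0.
move=> /andP[hab hs]; rewrite ltnS => hi.
have := IH b i hs hi; rewrite /R in hab; lia.
Qed.

Lemma conj_le lam j : conj_part lam j <= size lam.
Proof. exact: count_size. Qed.

Lemma no_hook d s lam h : d_distinct d lam -> size lam + head 0 lam <= s ->
  s <= h -> ~~ has_hook lam h.
Proof.
case: lam => [|a t] //= hdd hsz hh.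
apply/hasPn => i; rewrite mem_iota => /andP[_ hi].
apply/hasPn => j; rewrite mem_iota => /andP[_ hj].
have := @dd_nth d a t i hdd hi; have := conj_le (a :: t) j.
rewrite /hook /=; lia.
Qed.

Lemma ivt (f : nat -> nat) s n : s <= f 0 -> f n < s ->
  (forall j, j < n -> f j <= f j.+1 + 2) ->
  exists2 j, j < n & (f j == s) || (f j == s.+1).
Proof.
elim: n f => [|n IH] f h0 hn hst; first lia.
case: (leqP s (f 1)) => h1.
- have [j hj hfj] := IH (fun j => f j.+1) h1 hn (fun j hj => hst j.+1 hj).
  by exists j.+1.
- exists 0 => //; have := hst 0 isT; lia.
Qed.

Lemma hook_bound d s lam : 1 <= d -> 2 <= s -> is_partition lam -> d_distinct d lam ->
  ~~ has_hook lam s -> ~~ has_hook lam s.+1 -> size lam + head 0 lam <= s.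
Proof.
move=> hd hs /andP[_ hpos] hdd hs1 hs2.
case E: lam hpos hdd hs1 hs2 => [|a t] //= /andP[ha hpos] hdd hs1 hs2.
rewrite -E in hs1 hs2 hdd.
case: (leqP ((size t).+1 + a) s) => // hbig; exfalso.
have huniq : uniq lam.
  apply: (sorted_uniq (@R_trans d)); [rewrite /R => x /=; lia | rewrite E; exact hdd].
have hallt : all (fun x => x + d <= a) t.
  exact: (order_path_min (@R_trans d) hdd).
have hc : forall j, j < a -> 1 <= conj_part lam j.
  move=> j hj; rewrite E /conj_part /= hj; lia.
pose f j := hook lam 0 j.
have hf : forall j, j < a -> f j = a - j - 1 + conj_part lam j.
  move=> j hj; rewrite /f /hook E /=; have := hc j hj; rewrite E; lia.
have hsz : conj_part lam 0 = (size t).+1.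
  rewrite E /conj_part /= ha.
  have /eqP -> : count (fun x => 0 < x) t == size t by rewrite -all_count.
  by [].
have hend : conj_part lam a.-1 = 1.
  rewrite E /conj_part /=.
  have -> : a.-1 < a by lia.
  have -> : count (fun x => a.-1 < x) t = 0.
    apply/eqP; rewrite -leqn0 leqNgt -has_count; apply/hasPn => x hx.
    have := allP hallt x hx; lia.
  by [].
have [j hj hfj] : exists2 j, j < a.-1 & (f j == s) || (f j == s.+1).
  apply: ivt.
  - rewrite hf //; have := hsz; lia.
  - rewrite hf; last lia; rewrite hend; lia.
  - move=> j hj; rewrite !hf; try lia.
    have := conj_split j lam.
    have : count (pred1 j.+1) lam <= 1 by rewrite count_uniq_mem // leq_b1.
    lia.
have mem0 : 0 \in iota 0 (size lam) by rewrite mem_iota E.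
have memj : j \in iota 0 (nth 0 lam 0) by rewrite mem_iota E /=; lia.
case/orP: hfj => /eqP hfj.
- move/hasPn: hs1 => /(_ 0 mem0) /hasPn /(_ j memj); rewrite -/(f j) hfj eqxx //.
- move/hasPn: hs2 => /(_ 0 mem0) /hasPn /(_ j memj); rewrite -/(f j) hfj eqxx //.
Qed.
Lemma opt_arith d q r l s X Y : r < d+2 -> X + d*l*l + 2*l*l = 2*l*s + d*l ->
  Y + d*(q+1)*(q+1) + 2*(q+1)*(q+1) = 2*(q+1)*s + d*(q+1) -> s = q*(d+2)+r+1 ->
  X <= Y /\ (X = Y -> l = q+1 \/ (r = 0 /\ l = q)).
Proof.
move=> hr hX hY hs; subst s.
case: (leqP l q) => hl.
- have [k hk] : exists k, q = l + k by exists (q - l); lia.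
  subst q.
  have E : Y = X + (k+1)*((d+2)*k + 2*r) by lia.
  split; first lia.
  move=> EXY; right; rewrite EXY in E.
  have : (k+1)*((d+2)*k + 2*r) = 0 by lia.
  move/eqP; rewrite muln_eq0 addn1 /= => /eqP; lia.
- have [k hk] : exists k, l = q + 1 + k by exists (l - q - 1); lia.
  subst l.
  have E : Y + 2*r*k = X + k*(d+2)*(k+1) by lia.
  clear hl; move: hX; case: k E => [|k] E hX.
  + split; [lia | left; lia].
  + have : 2 * r * k.+1 < k.+1*(d+2)*(k.+2).
        have h2: 2 * (d+2) <= (d+2) * k.+2 by rewrite mulnC leq_mul2l; apply/orP; right.
      have h1: 2*r < (d+2)*k.+2 by lia.
      have := h1; rewrite -(ltn_pmul2l (ltn0Sn k)); lia.
    lia.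
Qed.

Lemma opt_arith_eq d q r l s X Y : X + d*l*l + 2*l*l = 2*l*s + d*l ->
  Y + d*(q+1)*(q+1) + 2*(q+1)*(q+1) = 2*(q+1)*s + d*(q+1) -> s = q*(d+2)+r+1 ->
  (l = q+1 \/ (r = 0 /\ l = q)) -> X = Y.
Proof. move=> hX hY hs [hl|[hr hl]]; subst s l; try subst r; lia. Qed.

Lemma dom_seq (u v : seq nat) : size u = size v ->
  (forall i, i < size u -> nth 0 u i <= nth 0 v i) ->
  sumn u <= sumn v /\ (sumn u = sumn v -> u = v).
Proof.
elim: u v => [|x u IH] [|y v] //= [hs] hn.
have hxy : x <= y := hn 0 isT.
have [h1 h2] := IH v hs (fun i hi => hn i.+1 hi).
split; first lia.
move=> he; have exy : x = y by lia.
by rewrite exy (h2 ltac:(lia)).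
Qed.

Definition cand d s l := aux d (s - l) l.

Lemma core_char d s lam : 1 <= d -> 2 <= s ->
  core_ddist s d lam <->
  [/\ is_partition lam, d_distinct d lam & size lam + head 0 lam <= s].
Proof.
move=> hd hs; split.
- case/and3P=> hp hdd /andP[h1 h2]; split => //.
  exact: (hook_bound hd hs hp hdd h1 h2).
- case=> hp hdd hsz; apply/and3P; split => //; apply/andP; split.
  + exact: (no_hook hdd hsz (leqnn s)).
  + exact: (no_hook hdd hsz (leqnSn s)).
Qed.

Lemma feas_le d s l : l + l * d < s + d -> l <= s.
Proof.
case: l => [|l] h; first lia.
have : d <= l.+1 * d by rewrite mulSn leq_addr.
lia.
Qed.

Lemma cand_core d s l : 1 <= d -> 2 <= s -> l + l * d < s + d ->
  core_ddist s d (cand d s l).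
Proof.
move=> hd hs hf; have hl := feas_le hf.
have /andP[hsort hpos] := @aux_ok d (s - l) l ltac:(lia).
apply/(core_char _ hd hs); split => //.
- apply/andP; split => //; apply: sub_sorted hsort => x y /=; lia.
- rewrite /cand size_aux; case E: l => [|l'] /=; lia.
Qed.

Lemma core_dom d s lam : 1 <= d -> 2 <= s -> core_ddist s d lam ->
  size lam + size lam * d < s + d /\
  (forall i, i < size lam -> nth 0 lam i <= nth 0 (cand d s (size lam)) i).
Proof.
move=> hd hs /(core_char _ hd hs) [/andP[_ hpos] hdd hsz].
case: lam hpos hdd hsz => [|a t] hpos hdd hsz; first by split => //=; lia.
have hnth := @dd_nth d a t.
have hlast := hnth (size t) hdd (ltnSn _).
have hp : 0 < nth 0 (a :: t) (size t).
  by apply: (allP hpos); apply: mem_nth.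
split.
- move: hsz hlast hp => /=; rewrite mulSn; lia.
- move=> i hi; rewrite /cand nth_aux //.
  have := hnth i hdd hi; move: hsz => /=; lia.
Qed.

Lemma cand_sum d s l : l + l * d < s + d ->
  2 * psize (cand d s l) + d*l*l + 2*l*l = 2*l*s + d*l.
Proof.
move=> hf; have hl := feas_le hf.
have := @sum_aux d (s - l) l ltac:(lia).
rewrite /psize /cand.
have : l * (s - l) + l * l = l * s by rewrite -mulnDr subnK.
lia.
Qed.

Theorem mainTheorem6 (d s : nat) (hd : 1 <= d) (hs : 2 <= s) :
  exists L : seq (seq nat),
    uniq L /\
    (forall lam : seq nat,
        lam \in L <->
        (core_ddist s d lam /\
         forall mu : seq nat, core_ddist s d mu -> psize mu <= psize lam)) /\
    size L = (if s %% (d + 2) == 1 then 2 else 1).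
Proof.
set q := (s - 1) %/ (d + 2); set r := (s - 1) %% (d + 2).
have hsq : s = q * (d + 2) + r + 1.
  by rewrite /q /r -divn_eq; lia.
have hr : r < d + 2 by rewrite /r ltn_mod; lia.
have fq1 : q.+1 + q.+1 * d < s + d.
  case: (posnP q) => hq.
  - rewrite hq; lia.
  - rewrite hsq; lia.
have fq : q + q * d < s + d by rewrite hsq; lia.
have opt : forall l, l + l * d < s + d ->
    psize (cand d s l) <= psize (cand d s q.+1) /\
    (psize (cand d s l) = psize (cand d s q.+1) <-> l = q.+1 \/ (r = 0 /\ l = q)).
  move=> l hl.
  have hX := cand_sum hl.
  have hY : 2 * psize (cand d s q.+1) + d*(q+1)*(q+1) + 2*(q+1)*(q+1) = 2*(q+1)*s + d*(q+1).
    by rewrite addn1; exact: cand_sum fq1.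
  have [h1 h2] := opt_arith hr hX hY hsq.
  split; first lia.
  split.
  + move=> he; have := h2 ltac:(lia); case=> [?|[? ?]]; [left|right]; lia.
  + move=> h; have := opt_arith_eq hX hY hsq ltac:(case: h => [?|[? ?]]; [left|right]; lia); lia.
have maxP : forall lam,
    (core_ddist s d lam /\ forall mu, core_ddist s d mu -> psize mu <= psize lam) <->
    (lam = cand d s q.+1 \/ (r = 0 /\ lam = cand d s q)).
  move=> lam; split.
  - case=> hc hmax.
    have h1 := hmax _ (cand_core hd hs fq1).
    have [hf hdom] := core_dom hd hs hc.
    have [h2 h3] := dom_seq (esym (size_aux _ _ _)) hdom.
    have [h4 [h5 _]] := opt _ hf.
    have e1 : psize lam = psize (cand d s (size lam)) by apply/eqP; rewrite eqn_leq h2 /=; exact: leq_trans h4 h1.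
    have e2 := h3 e1.
    have [hl|[hr0 hl]] := h5 ltac:(apply/eqP; by rewrite eqn_leq h4 -e1 h1).
    + by left; rewrite e2 hl.
    + by right; split => //; rewrite e2 hl.
  - move=> hl.
    have [l [-> hfl heq]] : exists l, [/\ lam = cand d s l, l + l * d < s + d &
        psize (cand d s l) = psize (cand d s q.+1)].
      case: hl => [->|[hr0 ->]].
      + by exists q.+1.
      + exists q; split => //; have [_ [_ h]] := opt _ fq; apply: h; by right.
    split; first exact: cand_core.
    move=> mu hmu.
    have [hf hdom] := core_dom hd hs hmu.
    have [h2 _] := dom_seq (esym (size_aux _ _ _)) hdom.
    have [h4 _] := opt _ hf.
    rewrite /psize /cand in h2 h4 heq *; lia.
have hmod : (s %% (d + 2) == 1) = (r == 0).
  rewrite hsq -addnA modnMDl.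
  case: (ltngtP (r + 1) (d + 2)) => h.
  - by rewrite modn_small //; apply/eqP/eqP; lia.
  - lia.
  - rewrite h modnn; apply/eqP/eqP; lia.
have hne : cand d s q.+1 != cand d s q.
  by apply/eqP => /(congr1 size); rewrite /cand !size_aux; lia.
exists (if r == 0 then [:: cand d s q.+1; cand d s q] else [:: cand d s q.+1]).
rewrite hmod; split; [|split].
- by case: (r == 0) => //=; rewrite inE hne.
- move=> lam; rewrite maxP; case: eqP => hr0; rewrite !inE.
  + split; first by case/orP => /eqP ->; [left | right].
    by case=> [->|[_ ->]]; rewrite eqxx ?orbT.
  + split; first by move/eqP ->; left.
    by case=> [->|[]] //; rewrite eqxx.
- by case: (r == 0).
Qed.
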